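(* For an $(n,k)$ SPC product code, the block error probabilities under SC and Elias' decoding over the BEC($\epsilon$) satisfy $P_{\mathrm{SC}} \leq P_{\mathrm{E}}$.
   Context: Consider an $m$-dimensional $(n,k)$ systematic single parity-check (SPC) product code (each component code along dimension $\ell$ is an $(n_\ell,n_\ell-1)$ SPC code) used over the binary erasure channel BEC($\epsilon$). Successive cancellation (SC) decoding decodes the information bits $u_1,\dots,u_k$ in order, each decision $\hat u_i$ being based on the channel output and the previous decisions $\hat u_1,\dots,\hat u_{i-1}$ (likelihoods computed recursively across dimensions); Elias' decoding decodes the component codes dimension by dimension in one sweep and computes the likelihood of each $u_i$ without using decisions on other information bits. Over the BEC both decoders output an erasure when the two hypotheses are equally likely. $P_{\mathrm{SC}}$ and $P_{\mathrm{E}}$ denote the probabilities that the decoded vector (under SC and Elias' decoding, respectively) differs from the transmitted information vector $\boldsymbol{u}$ (an erasure counts as an error). *)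

(* Defs.v *)
From HB Require Import structures.
From mathcomp Require Import all_boot all_order all_algebra.
Set Implicit Arguments. Unset Strict Implicit. Unset Printing Implicit Defensive.
Import Order.TTheory GRing.Theory Num.Theory.

(* m-dimensional arrays.  A code is described by the list of component       *)
(* lengths ns = [:: n_1; ...; n_m]; the component code along dimension l     *)
(* (0-based index l = 0 .. m-1, i.e. the paper's dimension l+1) is the       *)
(* (n_{l+1}, n_{l+1}-1) SPC code.  A position is an m-tuple of indices,      *)
(* represented as nested pairs ('I_n1 * ('I_n2 * ( ... * unit))).            *)

Fixpoint pos (ns : seq nat) : finType :=
  match ns with
  | [::] => unit
  | n :: ns' => ('I_n * pos ns')%type
  end.

Fixpoint same_line (ns : seq nat) (l : nat) : pos ns -> pos ns -> bool :=
  match ns return pos ns -> pos ns -> bool with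
  | [::] => fun _ _ => true
  | n :: ns' => fun p q =>
      match l with
      | 0 => p.2 == q.2
      | l'.+1 => (p.1 == q.1) && same_line l' p.2 q.2
      end
  end.

(* the l-th coordinate of p is the last one, n_l - 1 (the parity index)     *)
Fixpoint is_last (ns : seq nat) (l : nat) : pos ns -> bool :=
  match ns return pos ns -> bool with
  | [::] => fun _ => false
  | n :: ns' => fun p =>
      match l with
      | 0 => val p.1 == n.-1
      | l'.+1 => is_last l' p.2
      end
  end.

Fixpoint info (ns : seq nat) : pos ns -> bool :=
  match ns return pos ns -> bool with
  | [::] => fun _ => true
  | n :: ns' => fun p => (val p.1 < n.-1) && info p.2
  end.

Definition xors (s : seq bool) : bool := foldr addb false s.

Definition parity_fill (ns : seq nat) (l : nat) (c : pos ns -> bool) :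
  pos ns -> bool :=
  fun p => if is_last l p
           then xors [seq c q | q <- enum (pos ns) & same_line l p q && (q != p)]
           else c p.

(* u is the information vector; only its values at info positions matter.  *)
Definition encode (ns : seq nat) (u : pos ns -> bool) : pos ns -> bool :=
  foldl (fun c l => parity_fill l c) (fun p => info p && u p) (iota 0 (size ns)).

(* Binary erasure channel: None = erasure.                                  *)

Definition bec_out (ns : seq nat) (c : pos ns -> bool) (E : {set pos ns}) :
  pos ns -> option bool :=
  fun p => if p \in E then None else Some (c p).

(* specialisation of the check-node (box-plus) likelihood combination.      *)
Definition oxor (s : seq (option bool)) : option bool :=
  foldr (fun a acc => match a, acc with
                      | Some x, Some y => Some (x (+) y)
                      | _, _ => None
                      end) (Some false) s.

(* Elias' decoding: one sweep over the dimensions l = 0..m-1; at dimension  *)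
(* l every line is decoded by the APP decoder of the SPC code, which over   *)
(* the BEC returns a known value for a symbol iff it is known or all other  *)
(* symbols of its line are known.  The decision on each information bit is  *)
(* its final value (erasure = tie).                                         *)

Definition elias_step (ns : seq nat) (l : nat) (y : pos ns -> option bool) :
  pos ns -> option bool :=
  fun p => if y p is Some b then Some b
           else oxor [seq y q | q <- enum (pos ns) & same_line l p q && (q != p)].

Definition elias_dec (ns : seq nat) (y : pos ns -> option bool) :
  pos ns -> option bool :=
  foldl (fun y l => elias_step l y) y (iota 0 (size ns)).

(* Successive cancellation decoding, defined recursively over the           *)
(* dimensions: the code on n_1 :: ns' is an SPC code of length n_1 whose    *)
(* symbols ("rows") are codewords of the code on ns'.  Rows r = 0..n_1-2    *)
(* are decoded in order: the observation of row r at column j is the        *)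
(* channel symbol, combined (check-node rule) with the XOR of the already   *)
(* decided previous rows and the channel symbols of the later rows; row r   *)
(* is then SC-decoded in the code on ns', and its re-encoded estimate is    *)
(* used for the following rows.  The parity row is re-encoded at the end.   *)
(* The function returns the re-encoded estimate on every position; the      *)
(* decisions on the information bits are its values at info positions.     *)

Fixpoint sc_dec (ns : seq nat) : (pos ns -> option bool) -> pos ns -> option bool :=
  match ns return (pos ns -> option bool) -> pos ns -> option bool with
  | [::] => fun y => y
  | n :: ns' => fun y =>
      let rows :=
        foldl (fun (d : 'I_n -> pos ns' -> option bool) (r : 'I_n) =>
                 let obs : pos ns' -> option bool := fun j =>
                   if y (r, j) is Some b then Some b
                   else oxor ([seq d r' j | r' <- enum 'I_n & val r' < val r]
                              ++ [seq y (r', j) | r' <- enum 'I_n & val r < val r'])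
                 in
                 let dr := @sc_dec ns' obs in
                 fun r' => if r' == r then dr else d r')
              (fun _ _ => None)
              [seq r <- enum 'I_n | val r < n.-1]
      in
      fun p => if val p.1 < n.-1 then rows p.1 p.2
               else oxor [seq rows r p.2 | r <- enum 'I_n & val r < n.-1]
  end.

(* Block error probability over BEC(eps), with the information vector       *)
(* uniformly distributed over {0,1}^k (represented by arrays vanishing off  *)
(* the info positions) and each code symbol erased independently with       *)
(* probability eps.  A block error occurs when some decision differs from   *)
(* the transmitted information bit (an erasure counts as an error).        *)

Definition decoder := forall ns : seq nat, (pos ns -> option bool) -> pos ns -> option bool.

Definition block_error (ns : seq nat) (dec : decoder) (u : {ffun pos ns -> bool})
  (E : {set pos ns}) : bool :=
  [exists p, info p && (dec ns (bec_out (encode u) E) p != Some (u p))].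

Definition msg_space (ns : seq nat) : {set {ffun pos ns -> bool}} :=
  [set u : {ffun pos ns -> bool} | [forall p : pos ns, ~~ info p ==> ~~ u p]].

Definition P_err (R : realFieldType) (eps : R) (ns : seq nat) (dec : decoder) : R :=
  \sum_(u in msg_space ns)
    (#|msg_space ns|%:R)^-1 *
    \sum_(E : {set pos ns} | block_error dec u E)
      eps ^+ #|E| * (1 - eps) ^+ (#|pos ns| - #|E|).

Definition P_SC (R : realFieldType) (eps : R) (ns : seq nat) : R :=
  P_err eps ns (@sc_dec).
Definition P_E (R : realFieldType) (eps : R) (ns : seq nat) : R :=
  P_err eps ns (@elias_dec).

(* Main.v *)
Require Import Defs.
From HB Require Import structures.
From mathcomp Require Import all_boot all_order all_algebra.
From Stdlib Require Import FunctionalExtensionality.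
From mathcomp Require Import zify.
Set Implicit Arguments. Unset Strict Implicit. Unset Printing Implicit Defensive.
Import Order.TTheory GRing.Theory Num.Theory.

Definition ox (a b : option bool) : option bool :=
  match a, b with Some x, Some y => Some (x (+) y) | _, _ => None end.

Lemma oxA : associative ox.
Proof. by move=> [[]|] [[]|] [[]|]. Qed.
Lemma oxC : commutative ox.
Proof. by move=> [[]|] [[]|]. Qed.
Lemma ox1 : left_id (Some false) ox.
Proof. by move=> [[]|]. Qed.
HB.instance Definition _ := Monoid.isComLaw.Build (option bool) (Some false) ox oxA oxC ox1.

Lemma oxorE s : oxor s = foldr ox (Some false) s.
Proof. by []. Qed.

Lemma foldr_big (V : Type) (idx : V) (op : Monoid.com_law idx) (T : finType)
  (P : pred T) (f : T -> V) :
  foldr op idx [seq f q | q <- enum T & P q] = \big[op/idx]_(q | P q) f q.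
Proof. by rewrite foldrE big_map big_filter big_enum_cond. Qed.

Lemma oxor_big (T : finType) (P : pred T) (f : T -> option bool) :
  oxor [seq f q | q <- enum T & P q] = \big[ox/Some false]_(q | P q) f q.
Proof. exact: (foldr_big (Monoid.ComLaw.clone _ _ ox _)). Qed.

Lemma xors_big (T : finType) (P : pred T) (f : T -> bool) :
  xors [seq f q | q <- enum T & P q] = \big[addb/false]_(q | P q) f q.
Proof. exact: (foldr_big (Monoid.ComLaw.clone _ _ addb _)). Qed.

Lemma line_row (V : Type) (idx : V) (op : Monoid.com_law idx) n (ns : seq nat)
  (l : nat) (r : 'I_n) (j : pos ns) (f : pos (n :: ns) -> V) :
  \big[op/idx]_(q : pos (n :: ns) | @same_line (n :: ns) l.+1 (r, j) q && (q != ((r, j) : pos (n :: ns)))) f q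
  = \big[op/idx]_(q : pos ns | same_line l j q && (q != j)) f (r, q).
Proof.
transitivity (\big[op/idx]_(a | a == r)
   \big[op/idx]_(b | same_line l j b && ((a, b) != (r, j))) f (a, b)); last first.
  by rewrite big_pred1_eq; apply: eq_bigl => b; rewrite xpair_eqE eqxx.
rewrite pair_big_dep; apply: eq_big; last by case.
by case=> a b /=; rewrite [r == a]eq_sym; case: eqP => //= ->.
Qed.

Lemma line0 (V : Type) (idx : V) (op : Monoid.com_law idx) n (ns : seq nat)
  (r : 'I_n) (j : pos ns) (f : pos (n :: ns) -> V) :
  \big[op/idx]_(q : pos (n :: ns) | @same_line (n :: ns) 0 (r, j) q && (q != ((r, j) : pos (n :: ns)))) f q
  = \big[op/idx]_(r' : 'I_n | r' != r) f (r', j).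
Proof.
transitivity (\big[op/idx]_(a | a != r) \big[op/idx]_(b | b == j) f (a, b)); last first.
  by apply: eq_bigr => a _; rewrite big_pred1_eq.
rewrite pair_big_dep; apply: eq_big; last by case.
case=> a b /=; rewrite xpair_eqE [j == b]eq_sym.
by case: (b == j); rewrite ?andbT ?andbF.
Qed.

Lemma line_row_addb n (ns : seq nat)
  (l : nat) (r : 'I_n) (j : pos ns) (f : pos (n :: ns) -> bool) :
  \big[addb/false]_(q : pos (n :: ns) | @same_line (n :: ns) l.+1 (r, j) q && (q != ((r, j) : pos (n :: ns)))) f q
  = \big[addb/false]_(q : pos ns | same_line l j q && (q != j)) f (r, q).
Proof. exact: (line_row (Monoid.ComLaw.clone _ _ addb _)). Qed.
Lemma line_row_ox n (ns : seq nat)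
  (l : nat) (r : 'I_n) (j : pos ns) (f : pos (n :: ns) -> option bool) :
  \big[ox/Some false]_(q : pos (n :: ns) | @same_line (n :: ns) l.+1 (r, j) q && (q != ((r, j) : pos (n :: ns)))) f q
  = \big[ox/Some false]_(q : pos ns | same_line l j q && (q != j)) f (r, q).
Proof. exact: (line_row (Monoid.ComLaw.clone _ _ ox _)). Qed.
Lemma line0_addb n (ns : seq nat)
  (r : 'I_n) (j : pos ns) (f : pos (n :: ns) -> bool) :
  \big[addb/false]_(q : pos (n :: ns) | @same_line (n :: ns) 0 (r, j) q && (q != ((r, j) : pos (n :: ns)))) f q
  = \big[addb/false]_(r' : 'I_n | r' != r) f (r', j).
Proof. exact: (line0 (Monoid.ComLaw.clone _ _ addb _)). Qed.
Lemma line0_ox n (ns : seq nat)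
  (r : 'I_n) (j : pos ns) (f : pos (n :: ns) -> option bool) :
  \big[ox/Some false]_(q : pos (n :: ns) | @same_line (n :: ns) 0 (r, j) q && (q != ((r, j) : pos (n :: ns)))) f q
  = \big[ox/Some false]_(r' : 'I_n | r' != r) f (r', j).
Proof. exact: (line0 (Monoid.ComLaw.clone _ _ ox _)). Qed.

Lemma pf_row n (ns : seq nat) l (c : pos (n :: ns) -> bool) (r : 'I_n) :
  (fun j => @parity_fill (n :: ns) l.+1 c (r, j)) = parity_fill l (fun j => c (r, j)).
Proof.
apply: functional_extensionality => j; rewrite /parity_fill /=.
case: ifP => // _; rewrite !xors_big.
exact: line_row_addb.
Qed.

Definition F (ns : seq nat) (c : pos ns -> bool) : pos ns -> bool :=
  foldl (fun c l => parity_fill l c) c (iota 0 (size ns)).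

Lemma encodeE ns (u : pos ns -> bool) : encode u = F (fun p => info p && u p).
Proof. by []. Qed.

Lemma F_cons n ns (c : pos (n :: ns) -> bool) r j :
  F c (r, j) = F (fun j => @parity_fill (n :: ns) 0 c (r, j)) j.
Proof.
rewrite /F /= -[1]/(1 + 0) iotaDl.
elim: (iota 0 (size ns)) (parity_fill 0 c) => [|x s IH] c' //=.
by rewrite IH pf_row.
Qed.

Lemma info_not_last ns l (p : pos ns) : info p -> is_last l p = false.
Proof.
elim: ns l p => [|n ns IH] l p //=.
case/andP=> h1 h2; case: l => [|l] /=; last exact: IH.
by apply/negbTE; move: h1; case: eqP => // ->; rewrite ltnn.
Qed.

Lemma F_info ns (c : pos ns -> bool) p : info p -> F c p = c p.
Proof.
move=> ip; rewrite /F.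
elim: (iota 0 (size ns)) c => [|x s IH] c //=.
by rewrite IH /parity_fill info_not_last.
Qed.

Lemma xors_map_add (T : Type) (a b : T -> bool) s :
  xors [seq a q (+) b q | q <- s] = xors (map a s) (+) xors (map b s).
Proof.
elim: s => [|x s IH] //=; rewrite IH.
by case: (a x); case: (b x); case: (xors (map a s)); case: (xors (map b s)).
Qed.

Lemma xors_map0 (T : Type) s : xors [seq false | _ : T <- s] = false.
Proof. by elim: s. Qed.

Lemma F_add ns (a b : pos ns -> bool) :
  F (fun p => a p (+) b p) = fun p => F a p (+) F b p.
Proof.
rewrite /F; elim: (iota 0 (size ns)) a b => [|x s IH] a b //=.
rewrite -IH; congr foldl; apply: functional_extensionality => p.
rewrite /parity_fill; case: ifP => // _.
by rewrite xors_map_add.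
Qed.

Lemma F_zero ns : F (fun _ : pos ns => false) = fun _ => false.
Proof.
rewrite /F; elim: (iota 0 (size ns)) => [|x s IH] //=.
have E : parity_fill x (fun _ : pos ns => false) = (fun _ => false).
  apply: functional_extensionality => p.
  rewrite /parity_fill; case: ifP => // _.
  by elim: (filter _ _).
by rewrite E.
Qed.

Lemma F_sum ns (I : Type) (s : seq I) (g : I -> pos ns -> bool) j :
  \big[addb/false]_(r <- s) F (g r) j = F (fun j => \big[addb/false]_(r <- s) g r j) j.
Proof.
elim: s => [|x s IH].
  have E : (fun j => \big[addb/false]_(r <- [::]) g r j) = (fun _ => false).
    by apply: functional_extensionality => p; rewrite big_nil.
  by rewrite big_nil E F_zero.
have E : (fun j => \big[addb/false]_(r <- x :: s) g r j) =
         (fun j => g x j (+) \big[addb/false]_(r <- s) g r j).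
  by apply: functional_extensionality => p; rewrite big_cons.
by rewrite big_cons IH E F_add.
Qed.

Lemma pf0_col n ns (c : pos (n :: ns) -> bool) (j : pos ns) :
  \big[addb/false]_(r : 'I_n) @parity_fill (n :: ns) 0 c (r, j) = false.
Proof.
case: n c j => [|n] c j; first by rewrite big_ord0.
rewrite (bigD1 ord_max) //= {1}/parity_fill /= eqxx xors_big.
rewrite line0_addb.
rewrite [X in _ (+) X](eq_bigr (fun r => c (r, j))); first by rewrite addbb.
move=> r ne; rewrite /parity_fill /=.
by rewrite (_ : (val r == n) = false) //; apply/negbTE; move: ne; apply: contra => /eqP e; apply/eqP/val_inj.
Qed.

Fixpoint cw (ns : seq nat) : (pos ns -> bool) -> Prop :=
  match ns return (pos ns -> bool) -> Prop with
  | [::] => fun _ => True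
  | n :: ns' => fun c =>
      (forall j : pos ns', \big[addb/false]_(r : 'I_n) c (r, j) = false) /\
      (forall r : 'I_n, cw (fun j => c (r, j)))
  end.

Lemma F_cw ns (c : pos ns -> bool) : cw (F c).
Proof.
elim: ns c => [|n ns IH] c //=; split.
  move=> j; rewrite (eq_bigr (fun r => F (fun j => @parity_fill (n :: ns) 0 c (r, j)) j)).
    by rewrite F_sum (_ : (fun j => _) = fun _ => false) ?F_zero //;
       apply: functional_extensionality => j'; rewrite pf0_col.
  by move=> r _; rewrite F_cons.
move=> r; rewrite (_ : (fun j => _) = F (fun j => @parity_fill (n :: ns) 0 c (r, j))) //.
by apply: functional_extensionality => j; rewrite F_cons.
Qed.

Definition sc_obs n ns (y : pos (n :: ns) -> option bool)
  (d : 'I_n -> pos ns -> option bool) (r : 'I_n) : pos ns -> option bool :=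
  fun j => if y (r, j) is Some b then Some b
           else oxor ([seq d r' j | r' <- enum 'I_n & val r' < val r]
                      ++ [seq y (r', j) | r' <- enum 'I_n & val r < val r']).

Definition sc_step n ns (y : pos (n :: ns) -> option bool)
  (d : 'I_n -> pos ns -> option bool) (r : 'I_n) : 'I_n -> pos ns -> option bool :=
  fun r' => if r' == r then sc_dec (sc_obs y d r) else d r'.

Definition sc_rows n ns (y : pos (n :: ns) -> option bool) :=
  foldl (@sc_step n ns y) (fun _ _ => None) [seq r <- enum 'I_n | val r < n.-1].

Lemma sc_dec_cons n ns (y : pos (n :: ns) -> option bool) (r : 'I_n) (j : pos ns) :
  @sc_dec (n :: ns) y (r, j) =
  if val r < n.-1 then sc_rows y r j
  else oxor [seq sc_rows y r' j | r' <- enum 'I_n & val r' < n.-1].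
Proof. reflexivity. Qed.

Lemma isSome_oxor s : isSome (oxor s) = all isSome s.
Proof.
elim: s => [|a s IH] //=; rewrite -IH.
by case: a => [a|] //=; case: (oxor s).
Qed.

Lemma oxor_cat s1 s2 : oxor (s1 ++ s2) = ox (oxor s1) (oxor s2).
Proof.
elim: s1 => [|a s1 IH] /=; first by case: (oxor s2) => [[]|].
by rewrite IH -oxA.
Qed.

Lemma oxor_sound (T : Type) (s : seq T) (f : T -> option bool) (g : T -> bool) b :
  (forall x b', f x = Some b' -> b' = g x) ->
  oxor (map f s) = Some b -> b = xors (map g s).
Proof.
move=> hf; elim: s b => [|x s IH] b /=; first by case.
case e1: (f x) => [b1|] //; case e2: (oxor (map f s)) => [b2|] //= [<-].
by rewrite (hf _ _ e1) (IH _ e2).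
Qed.

Lemma foldl_rel (A B X : Type) (Rel : A -> B -> Prop) (f : A -> X -> A)
  (g : B -> X -> B) s a b :
  Rel a b -> (forall a b x, Rel a b -> Rel (f a x) (g b x)) ->
  Rel (foldl f a s) (foldl g b s).
Proof. by elim: s a b => [|x s IH] a b //= h hs; apply: IH => //; apply: hs. Qed.

Lemma split_ne n (g : 'I_n -> bool) (r : 'I_n) :
  \big[addb/false]_(r' : 'I_n) g r' = false ->
  \big[addb/false]_(r' | val r' < val r) g r' (+)
  \big[addb/false]_(r' | val r < val r') g r' = g r.
Proof.
rewrite (bigD1 r) //= (bigID (fun r' => val r' < val r)) /=.
rewrite (eq_bigl (fun r' => val r' < val r)); last first.
  by move=> r' /=; rewrite -(inj_eq val_inj) /=; case: ltngtP.
rewrite [X in _ (+) (_ (+) X)](eq_bigl (fun r' => val r < val r')); last first.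
  by move=> r' /=; rewrite -(inj_eq val_inj) /=; case: ltngtP.
by move: (g r) (\big[addb/false]_(i | _) g i) (\big[addb/false]_(i | val r < val i) g i)
  => [] [] [].
Qed.

Lemma sc_sound ns (y : pos ns -> option bool) (c : pos ns -> bool) :
  cw c -> (forall p b, y p = Some b -> b = c p) ->
  forall p b, sc_dec y p = Some b -> b = c p.
Proof.
elim: ns y c => [|n ns IH] y c; first by move=> _ hy p b /hy.
move=> [col rows] hy [r j] b.
have inv : forall r j b, sc_rows y r j = Some b -> b = c (r, j).
  rewrite /sc_rows.
  set Inv := fun d : 'I_n -> pos ns -> option bool =>
    forall r j b, d r j = Some b -> b = c (r, j).
  suff : forall s d, Inv d -> Inv (foldl (sc_step y) d s) by apply.
  elim=> [|r0 s IHs] d hd //=; apply: IHs.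
  move=> r1 j1 b1; rewrite /sc_step; case: eqP => [->|_]; last exact: hd.
  apply: (IH _ _ (rows r0)) => j2 b2.
  rewrite /sc_obs; case e: (y (r0, j2)) => [b0|]; first by case=> <-; exact: hy e.
  rewrite oxor_cat.
  case e1: (oxor _) => [b3|] //; case e2: (oxor _) => [b4|] //= [<-].
  rewrite (oxor_sound (g := fun r' => c (r', j2)) _ e1); last first.
    by move=> x b' /hd.
  rewrite (oxor_sound (g := fun r' => c (r', j2)) _ e2); last first.
    by move=> x b' /hy.
  by rewrite !xors_big split_ne.
rewrite sc_dec_cons; case: ifP => hr; first exact: inv.
move=> e; rewrite (oxor_sound (g := fun r' => c (r', j)) _ e); last first.
  by move=> x b' /inv.
rewrite xors_big.
move: (col j); rewrite (bigD1 r) //=.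
rewrite (eq_bigl (fun r' : 'I_n => val r' < n.-1)); last first.
  move=> r' /=.
  have h1 : nat_of_ord r < n := ltn_ord r; have h2 : nat_of_ord r' < n := ltn_ord r'.
  have hr' : n.-1 <= nat_of_ord r by rewrite leqNgt; exact: (negbT hr).
  apply/idP/idP => H.
    have : nat_of_ord r' != nat_of_ord r by exact: H.
    move/eqP; lia.
  by apply/negP => /eqP E; rewrite E in H; lia.
by case: (c (r, j)); case: (\big[addb/false]_(i < n | val i < n.-1) c (i, j)).
Qed.

Lemma sc_mono ns (y y' : pos ns -> option bool) :
  (forall p, isSome (y p) -> isSome (y' p)) ->
  forall p, isSome (sc_dec y p) -> isSome (sc_dec y' p).
Proof.
elim: ns y y' => [|n ns IH] y y' hy; first exact: hy.
have inv : forall r j, isSome (sc_rows y r j) -> isSome (sc_rows y' r j).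
  rewrite /sc_rows.
  apply: (foldl_rel (Rel := fun d d' : 'I_n -> pos ns -> option bool =>
      forall r j, isSome (d r j) -> isSome (d' r j))) => // d d' r0 hd r j.
  rewrite /sc_step; case: eqP => _; last exact: hd.
  apply: IH => j2; rewrite /sc_obs.
  case e: (y (r0, j2)) => [b|].
    move: (hy (r0, j2)); rewrite e.
    by case: (y' (r0, j2)) => [b'|] //= H; move: (H isT).
  case: (y' (r0, j2)) => [b'|] // /=.
  rewrite !isSome_oxor !all_cat !all_map => /andP [h1 h2]; apply/andP; split.
    by apply: sub_all h1 => x /=; apply: hd.
  by apply: sub_all h2 => x /=; apply: hy.
move=> [r j]; rewrite !sc_dec_cons; case: ifP => _; first exact: inv.
by rewrite !isSome_oxor !all_map => h; apply: sub_all h => x /=; apply: inv.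
Qed.

Lemma es_row n (ns : seq nat) l (y : pos (n :: ns) -> option bool) (r : 'I_n) :
  (fun j => @elias_step (n :: ns) l.+1 y (r, j)) = elias_step l (fun j => y (r, j)).
Proof.
apply: functional_extensionality => j; rewrite /elias_step /=.
case: (y (r, j)) => // ; rewrite !oxor_big.
exact: line_row_ox.
Qed.

Lemma elias_cons n ns (y : pos (n :: ns) -> option bool) r j :
  elias_dec y (r, j) = elias_dec (fun j => @elias_step (n :: ns) 0 y (r, j)) j.
Proof.
rewrite /elias_dec /= -[1]/(1 + 0) iotaDl.
elim: (iota 0 (size ns)) (elias_step 0 y) => [|x s IH] y' //=.
by rewrite IH es_row.
Qed.

Lemma filter_iota_lt k n : k <= n -> [seq i <- iota 0 n | i < k] = iota 0 k.
Proof.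
move=> h; rewrite -(subnKC h) iotaD filter_cat.
rewrite (_ : [seq i <- iota 0 k | i < k] = iota 0 k); last first.
  by apply/all_filterP/allP => i; rewrite mem_iota.
rewrite (_ : [seq i <- iota (0 + k) (n - k) | i < k] = [::]) ?cats0 //.
rewrite -(filter_pred0 (iota (0 + k) (n - k))); apply: eq_in_filter => i.
by rewrite mem_iota /= add0n => /andP [hi _]; rewrite ltnNge hi.
Qed.

Lemma filter_ord_lt n k (hk : k < n) :
  [seq r <- enum 'I_n | val r < k.+1] =
  rcons [seq r <- enum 'I_n | val r < k] (Ordinal hk).
Proof.
apply: (inj_map val_inj); rewrite map_rcons.
rewrite -!(filter_map val (fun i => i < _)) val_enum_ord.
rewrite !filter_iota_lt ?(ltnW hk) //.
by rewrite -addn1 iotaD /= cats1.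
Qed.

Lemma sc_complete ns (y : pos ns -> option bool) :
  (forall p, info p -> isSome (elias_dec y p)) ->
  forall p, isSome (sc_dec y p).
Proof.
elim: ns y => [|n ns IH] y hy; first by move=> p; exact: (hy p).
set init := (fun (_ : 'I_n) (_ : pos ns) => @None bool).
have rk : forall k, k <= n.-1 -> forall r : 'I_n, val r < k -> forall j,
    isSome (foldl (sc_step y) init [seq r <- enum 'I_n | val r < k] r j).
  elim=> [|k IHk] hk r //.
  have hkn : k < n by move: hk; case: (n) => //= m; lia.
  rewrite (filter_ord_lt hkn) foldl_rcons => hr j.
  set D := foldl _ _ _.
  rewrite /sc_step; case: eqP => [er|ne]; last first.
    apply: IHk; first by lia.
    have : nat_of_ord r != k.
      by apply/eqP => ek; apply: ne; apply: val_inj.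
    by move: hr => /=; lia.
  apply: (sc_mono (y := fun j => @elias_step (n :: ns) 0 y (Ordinal hkn, j))).
    move=> j2; rewrite /elias_step /sc_obs.
    case e: (y (Ordinal hkn, j2)) => [b|] //=.
    rewrite !isSome_oxor all_cat => /allP hall; apply/andP; split.
      apply/allP => x /mapP [r' hr' ->].
      apply: IHk; first by lia.
      by move: hr'; rewrite mem_filter => /andP [].
    apply/allP => x /mapP [r' hr' ->]; apply: hall; apply/mapP.
    exists (r', j2) => //; rewrite mem_filter mem_enum andbT /= eqxx /=.
    move: hr'; rewrite mem_filter => /andP [lt _].
    rewrite xpair_eqE negb_and; apply/orP; left; apply/eqP => ee.
    by move: lt; rewrite ee /= ltnn.
  apply: IH => j2 ij2.
  rewrite -elias_cons; apply: hy => /=; rewrite ij2 andbT /=.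
  by move: hk; lia.
move=> [r j]; rewrite sc_dec_cons /sc_rows; case: ifP => hr.
  by apply: rk.
rewrite isSome_oxor all_map; apply/allP => r' /=.
rewrite mem_filter => /andP [lt _]; exact: rk.
Qed.

Lemma pointwise ns (u : {ffun pos ns -> bool}) (E : {set pos ns}) :
  block_error (@sc_dec) u E -> block_error (@elias_dec) u E.
Proof.
apply: contraTT; rewrite /block_error => /existsPn h; apply/existsPn => p.
apply/negP => /andP [ip hne].
have known : forall q, isSome (sc_dec (bec_out (encode u) E) q).
  apply: sc_complete => q iq; move: (h q); rewrite iq /= negbK => /eqP -> //.
have cons : forall q b, bec_out (encode u) E q = Some b -> b = encode u q.
  by move=> q b; rewrite /bec_out; case: ifP => // _ [<-].
have sound := sc_sound (F_cw _) cons.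
move: hne (known p); case e: (sc_dec _ p) => [b|] // /eqP hne _; apply: hne.
rewrite (sound _ _ e).
by rewrite F_info // ip.
Qed.

Unset Implicit Arguments.
Local Open Scope ring_scope.

Theorem theorem1 (R : realFieldType) (ns : seq nat) (eps : R) :
  all (fun n => 1 < n)%N ns -> 0 <= eps <= 1 ->
  P_SC eps ns <= P_E eps ns.
Proof.
move=> _ /andP [e0 e1].
rewrite /P_SC /P_E /P_err; apply: ler_sum => u _.
apply: ler_wpM2l; first by rewrite invr_ge0 ler0n.
rewrite [X in X <= _]big_mkcond [X in _ <= X]big_mkcond /=.
apply: ler_sum => E _.
have w0 : 0 <= eps ^+ #|E| * (1 - eps) ^+ (#|pos ns| - #|E|).
  by rewrite mulr_ge0 // exprn_ge0 // subr_ge0.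
case: ifP => h1; first by rewrite (pointwise h1).
by case: ifP.
Qed.
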